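(* Under the system model and Algorithm NCA of the context, if $Q_s[0]=Z[0]=0$ for all $s$, then for all $t\ge 0$ and all $s$, $$Q_s[t]\le \frac{b_sV}{2},\qquad Z[t]\le \max_{s}\{b_s\}\frac{CVK}{2}+P_{peak}.$$ Consequently the encoder queues are rate stable ($\lim_{t\to\infty}Q_s[t]/t=0$ w.p.1) and the time-average power constraint $\limsup_{T\to\infty}\frac1T\sum_{t=0}^{T-1}P[t]\le P_{av}$ holds with probability 1.
   Context: System model. Time is slotted, $t=0,1,2,\dots$. One transmitter serves $S$ receivers. The channel state in slot $t$ is $\mathbf h[t]=(h_1[t],\dots,h_S[t])$ (constant within a slot); the transmitter only knows an imperfect estimate $\hat{\mathbf h}[t]=(\hat h_1[t],\dots,\hat h_S[t])$. The pairs $(h_s[t],\hat h_s[t])$ are i.i.d. across $t$ and independent across $s$, and the conditional law of $h_s$ given $\hat h_s$ is known to the transmitter; $E_{\mathbf h}\{\cdot\mid\hat h_s[t]\}$ denotes conditional expectation over the true channel given the estimate. The transmit power $P[t]$ satisfies $0\le P[t]\le P_{peak}$. The mutual information per symbol delivered to receiver $s$ is $I(h_s,P)$, nondecreasing and concave in $P$, with $I(h_s,0)=0$, $I(h_s,P_{peak})\le I_{\max}$ with probability 1, and $\frac{\partial}{\partial P}E_{\mathbf h}\{I(h_s,P)\mid\hat h_s\}\big|_{P=0}\le C$ for all $\hat h_s$, for finite constants $I_{\max},C>0$. Each packet has $K$ symbols. $c[t]\in\{0,1,\dots,S\}$ is the receiver scheduled in slot $t$ ($0$ = nobody; then $P[t]=0$).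 Rateless coding and queues. Receiver $s$ is sent a sequence of rateless codes indexed by $n_s[t]\in\{1,2,\dots\}$ (with $n_s[0]=1$); code $n$ carries $M_s[n]\ge 0$ message bits. The decoder queue $R_s[t]$ (initially $R_s[0]=M_s[1]$) evolves as: $R_s[t+1]=R_s[t]$ if $c[t]\ne s$; $R_s[t+1]=R_s[t]-I(h_s[t],P[t])K$ if $c[t]=s$ and $R_s[t]>I(h_s[t],P[t])K$; $R_s[t+1]=M_s[n_s[t]+1]$ if $c[t]=s$ and $R_s[t]\le I(h_s[t],P[t])K$. The ACK variable is $a[t]=s$ if $c[t]=s$ and $R_s[t]\le I(h_s[t],P[t])K$, and $a[t]=0$ otherwise. Then $n_s[t+1]=n_s[t]+1_{\{a[t]=s\}}$. The encoder queue evolves as $Q_s[t+1]=(Q_s[t]-M_s[n_s[t]]1_{\{a[t]=s\}})^++x_s[t]$, where $x_s[t]\in[0,D_s]$ is the admitted data. Let $t_{n,s}=\min\{t\ge 0:n_s[t]=n\}$. The block-size of the $n$th code of receiver $s$ is $$L_s[n]=\min\Big\{\textstyle\sum_{t=t_{n,s}}^{t_{n,s}+l-1}1_{\{c[t]=s\}}:\ M_s[n]\le \sum_{t=t_{n,s}}^{t_{n,s}+l-1}1_{\{c[t]=s\}}I(h_s[t],P[t])K,\ l\ge 1\Big\}.$$ Virtual queues: $Z[t+1]=(Z[t]-P_{av})^++P[t]$ and $W_s[n+1]=W_s[n]+L_s[n]-L_{av}$ (with $W_s[1]=0$), where $P_{av}>0$ and $L_{av}\ge 1$ are given targets. Each receiver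 has a utility $U_s$, concave, nondecreasing, continuously differentiable, $U_s(0)=0$, $U_s'(0)=b_s<\infty$. Algorithm NCA (parameters $\delta_M>0$, $\varepsilon>0$, $V>0$; $M_{\max}=I_{\max}L_{av}K$; initial $M_s[1]\in[0,M_{\max}]$). Encoding control: $M_s[n+1]=(M_s[n]-\delta_M)^+$ if $W_s[n]\ge 0$, and $M_s[n+1]=\min\{M_s[n]+\delta_M,M_{\max}\}$ if $W_s[n]<0$. Power allocation and scheduling: for each $s$ let $P_s[t]\in\arg\max_{P\in[0,P_{peak}]}\,Q_s[t]E_{\mathbf h}\{I(h_s[t],P)\mid\hat h_s[t]\}K-Z[t]P$, and let $\varsigma[t]\in\arg\max_{s}\,Q_s[t]E_{\mathbf h}\{I(h_s[t],P_s[t])\mid\hat h_s[t]\}K-Z[t]P_s[t]$. If $P_{\varsigma[t]}[t]<\varepsilon$ then $c[t]=0$, $P[t]=0$; otherwise $c[t]=\varsigma[t]$, $P[t]=P_{\varsigma[t]}[t]$. Rate control: $x_s[t]\in\arg\max_{x\in[0,D_s]}VU_s(x)-x^2-2Q_s[t]x$. All queues $R_s,Q_s,Z,W_s$ are updated by the rules above. *)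

(* Defs.v *)
From Stdlib Require Import Reals Lra Lia.
Open Scope R_scope.

Fixpoint sumR (f : nat -> R) (n : nat) : R :=
  match n with O => 0 | S k => sumR f k + f k end.

Fixpoint countN (p : nat -> bool) (n : nat) : nat :=
  match n with O => O | S k => (countN p k + (if p k then 1 else 0))%nat end.

Definition nondecr_on (D : R -> Prop) (f : R -> R) : Prop :=
  forall x y, D x -> D y -> x <= y -> f x <= f y.

Definition concave_on (D : R -> Prop) (f : R -> R) : Prop :=
  forall x y l, D x -> D y -> 0 <= l <= 1 ->
    l * f x + (1 - l) * f y <= f (l * x + (1 - l) * y).

Definition argmax_on (a b : R) (f : R -> R) (x : R) : Prop :=
  a <= x <= b /\ forall y, a <= y <= b -> f y <= f x.

(* max_{1 <= s <= S} b s  (the paper's max_s b_s, S >= 1) *)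
Fixpoint maxR_1 (b : nat -> R) (S : nat) : R :=
  match S with
  | O => b 1%nat
  | S k => match k with O => b 1%nat | _ => Rmax (maxR_1 b k) (b S) end
  end.

Definition first_time (nidx : nat -> nat -> nat) (s n t0 : nat) : Prop :=
  nidx t0 s = n /\ forall t, (t < t0)%nat -> nidx t s <> n.

(* L_s[n] = Lval : minimum over l >= 1 with
   M_s[n] <= sum_{t=t0}^{t0+l-1} 1{c[t]=s} I(h_s[t],P[t]) K
   of sum_{t=t0}^{t0+l-1} 1{c[t]=s}, where t0 = t_{n,s}. *)
Definition is_block_size {Hc : Type} (I : Hc -> R -> R) (K : nat)
  (h : nat -> nat -> Hc) (c : nat -> nat) (P : nat -> R)
  (nidx : nat -> nat -> nat) (M : nat -> nat -> R)
  (s n Lval : nat) : Prop :=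
  exists t0, first_time nidx s n t0 /\
    let cnt l := countN (fun i => Nat.eqb (c (t0 + i)%nat) s) l in
    let inf l := sumR (fun i => if Nat.eqb (c (t0 + i)%nat) s
                                then I (h (t0 + i)%nat s) (P (t0 + i)%nat) * INR K
                                else 0) l in
    (exists l, (1 <= l)%nat /\ M s n <= inf l /\ Lval = cnt l) /\
    (forall l, (1 <= l)%nat -> M s n <= inf l -> (Lval <= cnt l)%nat).

(* Main.v *)
Require Import Defs.
From Stdlib Require Import Reals.
Open Scope R_scope.
From Stdlib Require Import Lra Lia.
Lemma slope_le (Dm : R -> Prop) f p q : concave_on Dm f -> Dm 0 -> Dm p -> f 0 = 0 ->
  0 < q <= p -> f p * q <= f q * p.
Proof.
  intros Hc D0 Dp f0 Hq.
  assert (Hl : 0 <= q/p <= 1).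
  { split. apply Rlt_le, Rdiv_lt_0_compat; lra.
    apply (Rmult_le_reg_r p); [lra|]. replace (q/p*p) with q by (field; lra). lra. }
  pose proof (Hc p 0 (q/p) Dp D0 Hl) as H.
  replace (q/p*p + (1 - q/p)*0) with q in H by (field; lra).
  rewrite f0 in H.
  assert (q/p * f p * p <= f q * p) by (apply Rmult_le_compat_r; lra).
  replace (q/p * f p * p) with (f p * q) in H0 by (field; lra). lra.
Qed.

Lemma lim_bound f d pmax : concave_on (fun p => 0 <= p <= pmax) f -> f 0 = 0 ->
  limit1_in (fun p => (f p - f 0)/p) (fun p => 0 < p <= pmax) d 0 ->
  forall p, 0 < p <= pmax -> f p <= d * p.
Proof.
  intros Hc f0 Hl p Hp.
  destruct (Rle_dec (f p) (d*p)) as [|Hn]; auto. exfalso.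
  assert (Hep : 0 < f p / p - d).
  { replace (f p / p - d) with ((f p - d*p)/p) by (field; lra).
    apply Rdiv_lt_0_compat; lra. }
  destruct (Hl _ Hep) as [alp [Halp Hlim]].
  set (q := Rmin p (alp/2)).
  assert (Hq : 0 < q <= p).
  { unfold q, Rmin; destruct Rle_dec; lra. }
  assert (Hqa : q <= alp/2) by (unfold q; apply Rmin_r).
  specialize (Hlim q). simpl in Hlim. unfold R_dist in Hlim.
  assert (H1 : Rabs ((f q - f 0)/q - d) < f p / p - d).
  { apply Hlim. split. lra. rewrite Rminus_0_r, Rabs_right; lra. }
  rewrite f0 in H1. apply Rabs_def2 in H1. destruct H1 as [H1 _].
  assert (H2 : (f q - 0)/q < f p / p) by lra.
  pose proof (slope_le _ f p q Hc ltac:(lra) ltac:(lra) f0 Hq) as H3.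
  assert (H4 : (f q - 0)/q * (q*p) < f p / p * (q*p))
    by (apply Rmult_lt_compat_r; [nra|lra]).
  replace ((f q - 0)/q * (q*p)) with (f q * p) in H4 by (field; lra).
  replace (f p / p * (q*p)) with (f p * q) in H4 by (field; lra). lra.
Qed.

Lemma deriv_bound U b : concave_on (fun y => 0 <= y) U -> U 0 = 0 ->
  derivable_pt_lim U 0 b -> forall y, 0 < y -> U y <= b * y.
Proof.
  intros Hc f0 Hl p Hp.
  destruct (Rle_dec (U p) (b*p)) as [|Hn]; auto. exfalso.
  assert (Hep : 0 < U p / p - b).
  { replace (U p / p - b) with ((U p - b*p)/p) by (field; lra).
    apply Rdiv_lt_0_compat; lra. }
  destruct (Hl _ Hep) as [alp Hlim].
  pose proof (cond_pos alp) as Halp.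
  set (q := Rmin p (alp/2)).
  assert (Hq : 0 < q <= p).
  { unfold q, Rmin; destruct Rle_dec; lra. }
  assert (Hqa : q <= alp/2) by (unfold q; apply Rmin_r).
  assert (H1 : Rabs ((U (0+q) - U 0)/q - b) < U p / p - b).
  { apply Hlim. lra. rewrite Rabs_right; lra. }
  rewrite Rplus_0_l, f0 in H1. apply Rabs_def2 in H1. destruct H1 as [H1 _].
  assert (H2 : (U q - 0)/q < U p / p) by lra.
  pose proof (slope_le _ U p q Hc ltac:(simpl; lra) ltac:(simpl; lra) f0 Hq) as H3.
  assert (H4 : (U q - 0)/q * (q*p) < U p / p * (q*p))
    by (apply Rmult_lt_compat_r; [nra|lra]).
  replace ((U q - 0)/q * (q*p)) with (U q * p) in H4 by (field; lra).
  replace (U p / p * (q*p)) with (U p * q) in H4 by (field; lra). lra.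
Qed.

Lemma deriv_nonneg U b : nondecr_on (fun y => 0 <= y) U ->
  derivable_pt_lim U 0 b -> 0 <= b.
Proof.
  intros Hm Hl. destruct (Rle_dec 0 b) as [|Hn]; auto. exfalso.
  destruct (Hl (-b) ltac:(lra)) as [alp Hlim].
  pose proof (cond_pos alp) as Halp.
  assert (H1 : Rabs ((U (0+alp/2) - U 0)/(alp/2) - b) < -b).
  { apply Hlim. lra. rewrite Rabs_right; lra. }
  rewrite Rplus_0_l in H1.
  assert (H2 : U 0 <= U (alp/2)) by (apply Hm; simpl; lra).
  assert (H3 : 0 <= (U (alp/2) - U 0)/(alp/2)) by (apply Rmult_le_pos; [lra|apply Rlt_le, Rinv_0_lt_compat; lra]).
  apply Rabs_def2 in H1. lra.
Qed.

Lemma U_inc U b : concave_on (fun y => 0 <= y) U -> U 0 = 0 ->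
  derivable_pt_lim U 0 b -> forall y0 y, 0 <= y0 <= y -> U y - U y0 <= b * (y - y0).
Proof.
  intros Hc f0 Hl y0 y Hy.
  destruct (Req_dec y y0) as [->|Hne]. lra.
  assert (Hb := deriv_bound U b Hc f0 Hl y ltac:(lra)).
  destruct (Req_dec y0 0) as [->|Hne0]. rewrite f0; lra.
  pose proof (slope_le _ U y y0 Hc ltac:(simpl; lra) ltac:(simpl; lra) f0 ltac:(lra)) as H.
  apply (Rmult_le_reg_r y); [lra|].
  assert (U y * (y - y0) <= b*y*(y-y0)) by (apply Rmult_le_compat_r; lra).
  nra.
Qed.

Lemma x_le (U : R -> R) b V Q D x : 0 < V ->
  (forall y0 y, 0 <= y0 <= y -> U y - U y0 <= b*(y-y0)) -> 0 <= Q <= b*V/2 ->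
  argmax_on 0 D (fun y => V*U y - y*y - 2*Q*y) x -> x <= b*V/2 - Q.
Proof.
  intros HV Hinc HQ [[Hx0 HxD] Hmax].
  destruct (Rle_dec x (b*V/2 - Q)) as [|Hn]; auto. exfalso.
  set (y0 := b*V/2 - Q).
  assert (H1 := Hmax y0 ltac:(unfold y0; lra)).
  assert (H2 := Hinc y0 x ltac:(unfold y0; lra)).
  assert (H3 : V*(U x - U y0) <= V*(b*(x-y0))) by (apply Rmult_le_compat_l; lra).
  assert (Hb : b*V = 2*(y0+Q)) by (unfold y0; lra).
  assert (0 < (x-y0)*(x-y0)) by (apply Rmult_lt_0_compat; unfold y0; lra).
  simpl in H1. nra.
Qed.

Lemma maxR_ge b S s : (1 <= s <= S)%nat -> b s <= maxR_1 b S.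
Proof.
  induction S as [|k IH]; intros Hs. lia.
  destruct k as [|k]. replace s with 1%nat by lia. simpl. lra.
  change (maxR_1 b (S (S k))) with (Rmax (maxR_1 b (S k)) (b (S (S k)))).
  destruct (Nat.eq_dec s (S (S k))) as [->|Hn]. apply Rmax_r.
  eapply Rle_trans; [apply IH; lia|apply Rmax_l].
Qed.

(* Receivers are s = 1..Srx (Srx = S in the paper); c t = 0 means nobody is scheduled.  Every trajectory of NCA
   (arbitrary tie-breaking in the argmax's) along every realisation of the
   channel/estimate sequences is covered, so the "w.p.1" claims hold. *)
Theorem lemma3
  (Srx K : nat) (Hc He : Type)
  (I : Hc -> R -> R)                 (* I(h,P) *)
  (EI : nat -> He -> R -> R)         (* EI s hhat P = E{ I(h_s,P) | hhat_s = hhat } *)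
  (Ppeak Pav Imax C Lav V eps dM : R)
  (U dU : nat -> R -> R) (b D : nat -> R)
  (h : nat -> nat -> Hc) (hhat : nat -> nat -> He)
  (* trajectory of NCA *)
  (c : nat -> nat) (P : nat -> R) (Ps : nat -> nat -> R) (sig : nat -> nat)
  (x : nat -> nat -> R) (Q Rq : nat -> nat -> R) (Z : nat -> R)
  (nidx : nat -> nat -> nat) (M W : nat -> nat -> R) :
  (* ---- system model ---- *)
  (1 <= Srx)%nat -> (1 <= K)%nat ->
  0 <= Ppeak -> 0 < Pav -> 0 < Imax -> 0 < C -> 1 <= Lav ->
  (forall hv, nondecr_on (fun p => 0 <= p <= Ppeak) (I hv)) ->
  (forall hv, concave_on (fun p => 0 <= p <= Ppeak) (I hv)) ->
  (forall hv, I hv 0 = 0) ->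
  (forall t s, I (h t s) Ppeak <= Imax) ->
  (forall s e, nondecr_on (fun p => 0 <= p <= Ppeak) (EI s e)) ->
  (forall s e, concave_on (fun p => 0 <= p <= Ppeak) (EI s e)) ->
  (forall s e, EI s e 0 = 0) ->
  (forall s e, exists d, d <= C /\
     limit1_in (fun p => (EI s e p - EI s e 0) / p) (fun p => 0 < p <= Ppeak) d 0) ->
  (forall s, (1 <= s <= Srx)%nat ->
     (forall y, derivable_pt_lim (U s) y (dU s y)) /\ continuity (dU s) /\
     concave_on (fun y => 0 <= y) (U s) /\ nondecr_on (fun y => 0 <= y) (U s) /\
     U s 0 = 0 /\ dU s 0 = b s /\ 0 <= D s) ->
  (* ---- NCA parameters ---- *)
  0 < dM -> 0 < eps -> 0 < V ->
  (* ---- initial conditions ---- *)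
  (forall s, Q 0%nat s = 0) -> Z 0%nat = 0 ->
  (forall s, nidx 0%nat s = 1%nat) ->
  (forall s, Rq 0%nat s = M s 1%nat) ->
  (forall s, W s 1%nat = 0) ->
  (forall s, 0 <= M s 1%nat <= Imax * Lav * INR K) ->
  (* ---- encoding control ---- *)
  (forall s n, (1 <= n)%nat -> 0 <= W s n -> M s (S n) = Rmax (M s n - dM) 0) ->
  (forall s n, (1 <= n)%nat -> W s n < 0 ->
     M s (S n) = Rmin (M s n + dM) (Imax * Lav * INR K)) ->
  (forall s n Lval, (1 <= n)%nat -> is_block_size I K h c P nidx M s n Lval ->
     W s (S n) = W s n + INR Lval - Lav) ->
  (* ---- power allocation and scheduling ---- *)
  (forall t s, (1 <= s <= Srx)%nat ->
     argmax_on 0 Ppeak (fun p => Q t s * EI s (hhat t s) p * INR K - Z t * p) (Ps t s)) ->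
  (forall t, (1 <= sig t <= Srx)%nat /\
     forall s, (1 <= s <= Srx)%nat ->
       Q t s * EI s (hhat t s) (Ps t s) * INR K - Z t * Ps t s
       <= Q t (sig t) * EI (sig t) (hhat t (sig t)) (Ps t (sig t)) * INR K
          - Z t * Ps t (sig t)) ->
  (forall t, Ps t (sig t) < eps -> c t = 0%nat /\ P t = 0) ->
  (forall t, eps <= Ps t (sig t) -> c t = sig t /\ P t = Ps t (sig t)) ->
  (* ---- rate control ---- *)
  (forall t s, (1 <= s <= Srx)%nat ->
     argmax_on 0 (D s) (fun y => V * U s y - y * y - 2 * Q t s * y) (x t s)) ->
  (* ---- queue updates ---- *)
  (forall t s, c t <> s ->
     Rq (S t) s = Rq t s /\ nidx (S t) s = nidx t s /\
     Q (S t) s = Rmax (Q t s) 0 + x t s) ->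
  (forall t s, c t = s -> Rq t s > I (h t s) (P t) * INR K ->
     Rq (S t) s = Rq t s - I (h t s) (P t) * INR K /\ nidx (S t) s = nidx t s /\
     Q (S t) s = Rmax (Q t s) 0 + x t s) ->
  (forall t s, c t = s -> Rq t s <= I (h t s) (P t) * INR K ->
     Rq (S t) s = M s (S (nidx t s)) /\ nidx (S t) s = S (nidx t s) /\
     Q (S t) s = Rmax (Q t s - M s (nidx t s)) 0 + x t s) ->
  (forall t, Z (S t) = Rmax (Z t - Pav) 0 + P t) ->
  (* ---- conclusions ---- *)
  (forall t s, (1 <= s <= Srx)%nat -> Q t s <= b s * V / 2) /\
  (forall t, Z t <= maxR_1 b Srx * C * V * INR K / 2 + Ppeak) /\
  (forall s, (1 <= s <= Srx)%nat -> Un_cv (fun t => Q t s / INR t) 0) /\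
  (forall e, 0 < e -> exists N, forall T, (N <= T)%nat -> (1 <= T)%nat ->
     sumR P T / INR T <= Pav + e).
Proof.
  intros HS HK HPp HPav HImax HC HLav HImon HIconc HI0 HImax' HEImon HEIconc HEI0 HEId HU
    HdM Heps HV HQ0 HZ0 Hn0 HR0 HW1 HM1 HMge HMlt HWs Hps Hsig Hc0 Hc1 Hx Hup1 Hup2 Hup3 HZ.
  assert (HKp : 0 <= INR K) by apply pos_INR.
  assert (HCap : 0 <= Imax * Lav * INR K)
    by (apply Rmult_le_pos; [apply Rmult_le_pos|]; lra).
  assert (Hb : forall s, (1 <= s <= Srx)%nat -> 0 <= b s).
  { intros s Hs. destruct (HU s Hs) as (Hd & _ & _ & Hm & _ & Hd0 & _).
    apply (deriv_nonneg (U s)); auto. rewrite <- Hd0; apply Hd. }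
  assert (Hinc : forall s, (1 <= s <= Srx)%nat ->
            forall y0 y, 0 <= y0 <= y -> U s y - U s y0 <= b s * (y - y0)).
  { intros s Hs. destruct (HU s Hs) as (Hd & _ & Hcc & _ & H0 & Hd0 & _).
    apply U_inc; auto. rewrite <- Hd0; apply Hd. }
  assert (HMp : forall s n, (1 <= n)%nat -> 0 <= M s n).
  { intros s n. induction n as [|k IH]; intros Hn. lia.
    destruct k as [|k]. apply HM1.
    destruct (Rle_lt_dec 0 (W s (S k))) as [Hw|Hw].
    - rewrite HMge by (lia || lra). apply Rmax_r.
    - rewrite HMlt by (lia || lra). specialize (IH ltac:(lia)).
      unfold Rmin; destruct Rle_dec; lra. }
  assert (Hnp : forall t s, (1 <= nidx t s)%nat).
  { intros t s. induction t as [|t IH]. rewrite Hn0; lia.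
    destruct (Nat.eq_dec (c t) s) as [Hce|Hce].
    - destruct (Rle_lt_dec (Rq t s) (I (h t s) (P t) * INR K)) as [Hr|Hr].
      + destruct (Hup3 t s Hce Hr) as (_ & -> & _). lia.
      + destruct (Hup2 t s Hce Hr) as (_ & -> & _). lia.
    - destruct (Hup1 t s Hce) as (_ & -> & _). lia. }
  assert (HQstep : forall t s, 0 + x t s <= Q (S t) s <= Rmax (Q t s) 0 + x t s).
  { intros t s.
    assert (Hm0 : forall a, 0 <= Rmax a 0) by (intros; apply Rmax_r).
    destruct (Nat.eq_dec (c t) s) as [Hce|Hce].
    - destruct (Rle_lt_dec (Rq t s) (I (h t s) (P t) * INR K)) as [Hr|Hr].
      + destruct (Hup3 t s Hce Hr) as (_ & _ & ->).
        pose proof (HMp s (nidx t s) (Hnp t s)).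
        pose proof (Hm0 (Q t s - M s (nidx t s))).
        revert H H0; unfold Rmax; repeat destruct Rle_dec; intros; lra.
      + destruct (Hup2 t s Hce Hr) as (_ & _ & ->). pose proof (Hm0 (Q t s)). lra.
    - destruct (Hup1 t s Hce) as (_ & _ & ->). pose proof (Hm0 (Q t s)). lra. }
  assert (HQb : forall t s, (1 <= s <= Srx)%nat -> 0 <= Q t s <= b s * V / 2).
  { intros t s Hs. induction t as [|t IH].
    - rewrite HQ0. pose proof (Hb s Hs). split; [lra|].
      apply Rmult_le_pos; [|lra]. apply Rmult_le_pos; lra.
    - pose proof (HQstep t s) as Hst.
      pose proof (Hx t s Hs) as Hxa.
      assert (Hx0 : 0 <= x t s) by (destruct Hxa as [[? ?] _]; lra).
      pose proof (x_le (U s) (b s) V (Q t s) (D s) (x t s) HV (Hinc s Hs) IH Hxa).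
      rewrite Rmax_left in Hst by lra. lra. }
  assert (HEIb : forall s e p, 0 <= p <= Ppeak -> EI s e p <= C * p).
  { intros s e p Hp. destruct (HEId s e) as [d [Hd Hl]].
    destruct (Req_dec p 0) as [->|Hne]. rewrite HEI0; lra.
    pose proof (lim_bound (EI s e) d Ppeak (HEIconc s e) (HEI0 s e) Hl p ltac:(lra)).
    nra. }
  set (B := maxR_1 b Srx * C * V * INR K / 2).
  assert (HbB : forall s, (1 <= s <= Srx)%nat -> 0 <= b s <= maxR_1 b Srx).
  { intros s Hs. split. apply Hb; auto. apply maxR_ge; auto. }
  assert (HB0 : 0 <= B).
  { unfold B. destruct (HbB 1%nat ltac:(lia)).
    apply Rmult_le_pos; [|lra]. repeat apply Rmult_le_pos; lra. }
  assert (HQB : forall t s, (1 <= s <= Srx)%nat -> Q t s * C * INR K <= B).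
  { intros t s Hs. destruct (HQb t s Hs). destruct (HbB s Hs). unfold B.
    assert (Q t s <= maxR_1 b Srx * V / 2) by nra.
    assert (0 <= C * INR K) by (apply Rmult_le_pos; lra).
    nra. }
  assert (HPs0 : forall t s, (1 <= s <= Srx)%nat -> Q t s * C * INR K < Z t -> Ps t s = 0).
  { intros t s Hs Hlt. destruct (Hps t s Hs) as [[Hp0 Hp1] Hmax].
    specialize (Hmax 0 ltac:(lra)). rewrite HEI0 in Hmax.
    pose proof (HEIb s (hhat t s) (Ps t s) ltac:(lra)) as HEe.
    destruct (HQb t s Hs) as [HQp _].
    assert (Q t s * EI s (hhat t s) (Ps t s) * INR K <= Q t s * (C * Ps t s) * INR K).
    { apply Rmult_le_compat_r; auto. apply Rmult_le_compat_l; auto. }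
    nra. }
  assert (HP : forall t, 0 <= P t <= Ppeak).
  { intros t. destruct (Rlt_le_dec (Ps t (sig t)) eps) as [H|H].
    - destruct (Hc0 t H) as [_ ->]; lra.
    - destruct (Hc1 t H) as [_ ->]. destruct (Hsig t) as [Hs _].
      destruct (Hps t _ Hs) as [? _]; lra. }
  assert (HZb : forall t, 0 <= Z t <= B + Ppeak).
  { intros t. induction t as [|t IH]. rewrite HZ0; lra.
    rewrite HZ. pose proof (HP t).
    destruct (Rle_lt_dec (Z t) B) as [Hz|Hz].
    - unfold Rmax; destruct Rle_dec; lra.
    - destruct (Hsig t) as [Hs _].
      assert (HP0 : P t = 0).
      { apply Hc0. rewrite (HPs0 t (sig t) Hs); [lra|]. pose proof (HQB t _ Hs); lra. }
      rewrite HP0. unfold Rmax; destruct Rle_dec; lra. }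
  assert (Hsum : forall T, sumR P T <= Z T + INR T * Pav).
  { induction T as [|T IH]. simpl. rewrite HZ0; lra.
    simpl sumR. rewrite S_INR, HZ.
    assert (Z T - Pav <= Rmax (Z T - Pav) 0) by apply Rmax_l. lra. }
  split; [|split; [|split]].
  - intros t s Hs. apply HQb; auto.
  - intros t. apply HZb.
  - intros s Hs eps0 He0. destruct (HQb 0%nat s Hs) as [_ _].
    destruct (INR_archimed eps0 (b s * V / 2) He0) as [N HN].
    exists (S N). intros n Hn. unfold R_dist.
    destruct (HQb n s Hs) as [Hq1 Hq2].
    assert (HnN : INR (S N) <= INR n) by (apply le_INR; lia).
    rewrite S_INR in HnN. pose proof (pos_INR N).
    rewrite Rminus_0_r, Rabs_right.
    + apply (Rmult_lt_reg_r (INR n)); [lra|].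
      replace (Q n s / INR n * INR n) with (Q n s) by (field; lra). nra.
    + apply Rle_ge, Rmult_le_pos; [lra|]. apply Rlt_le, Rinv_0_lt_compat; lra.
  - intros e He0. destruct (INR_archimed e (B + Ppeak) He0) as [N HN].
    exists N. intros T HT HT1.
    assert (HTN : INR N <= INR T) by (apply le_INR; lia).
    assert (HT0 : 1 <= INR T) by (change 1 with (INR 1); apply le_INR; lia).
    apply (Rmult_le_reg_r (INR T)); [lra|].
    replace (sumR P T / INR T * INR T) with (sumR P T) by (field; lra).
    pose proof (Hsum T). pose proof (HZb T). nra.
Qed.
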